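(* Let $Q$ be a sequence, $G=(V,E,\delta)$ a pangenome graph, and $H$ the associated directed graph defined in the context. If $v_{(i_0,u_0,f_0)},v_{(i_1,u_1,f_1)},\dots,v_{(i_k,u_k,f_k)}$ is a directed path in $H$, then $Q_{i_0}Q_{i_1}\cdots Q_{i_k}$ is a common subsequence between $Q$ and $G$.
   Context: Strings are 0-indexed; $S_i$ is the character of $S$ at position $i$. A pangenome graph is a triple $G=(V,E,\delta)$ where $(V,E)$ is a finite directed graph and $\delta:V\to\Sigma^*\setminus\{\epsilon\}$ assigns to each vertex a nonempty string over an alphabet $\Sigma$. A path in $G$ is a sequence of vertices $P=w_0,\dots,w_k$ ($k\ge0$) with $(w_j,w_{j+1})\in E$ for $j<k$; $spell(P)=\delta(w_0)\cdots\delta(w_k)$. A sequence $S$ is a common subsequence between $Q$ and $G$ if there is a path $P$ in $G$ such that $S$ is a subsequence of both $Q$ and $spell(P)$. The directed graph $H$ has vertex set $\{v_{(i,u,f)}: 0\le i\le|Q|-1,\ u\in V,\ 0\le f\le|\delta(u)|-1,\ Q_i=\delta(u)_f\}$, and an edge from $v_{(i,u,f)}$ to $v_{(i',u',f')}$ if and only if $i<i'$ and either ($u\ne u'$ and there is a path from $u$ to $u'$ in $G$) or ($u=u'$ and $f<f'$). *)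

(* Defs.v *)
From mathcomp Require Import all_boot.
Set Implicit Arguments. Unset Strict Implicit. Unset Printing Implicit Defensive.

(* A pangenome graph G = (V, E, delta): V finite vertex type, E : rel V the
   directed edge relation, delta : V -> seq Sigma labelling every vertex by a
   nonempty string (the nonemptiness is a hypothesis of the theorem). *)

Definition is_gpath (V : finType) (E : rel V) (p : seq V) : bool :=
  match p with [::] => false | w0 :: ws => path E w0 ws end.

Definition spell (V : finType) (Sigma : eqType) (delta : V -> seq Sigma)
  (p : seq V) : seq Sigma := flatten (map delta p).

Definition gpath_from_to (V : finType) (E : rel V) (u u' : V) : Prop :=
  exists p : seq V, [/\ is_gpath E p, head u' p = u & last u p = u'].

Definition common_subseq (V : finType) (Sigma : eqType) (E : rel V)
  (delta : V -> seq Sigma) (Q S : seq Sigma) : Prop :=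
  exists p : seq V, is_gpath E p /\ subseq S Q /\ subseq S (spell delta p).

Definition hvertex (V : finType) (Sigma : eqType) (delta : V -> seq Sigma)
  (Q : seq Sigma) (x : nat * V * nat) : Prop :=
  let: (i, u, f) := x in
  [/\ i < size Q, f < size (delta u) & exists d : Sigma, nth d Q i = nth d (delta u) f].

Definition hedge (V : finType) (E : rel V) (x y : nat * V * nat) : Prop :=
  let: (i, u, f) := x in let: (i', u', f') := y in
  i < i' /\ ((u <> u' /\ gpath_from_to E u u') \/ (u = u' /\ f < f')).

Fixpoint hpath_rec (V : finType) (Sigma : eqType) (E : rel V)
  (delta : V -> seq Sigma) (Q : seq Sigma) (x : nat * V * nat)
  (xs : seq (nat * V * nat)) : Prop :=
  match xs with
  | [::] => True
  | y :: ys => hedge E x y /\ hvertex delta Q y /\ hpath_rec E delta Q y ys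
  end.

Definition is_hpath (V : finType) (Sigma : eqType) (E : rel V)
  (delta : V -> seq Sigma) (Q : seq Sigma) (p : seq (nat * V * nat)) : Prop :=
  match p with
  | [::] => False
  | x :: xs => hvertex delta Q x /\ hpath_rec E delta Q x xs
  end.

(* Main.v *)
Require Import Defs.
From mathcomp Require Import all_boot.

Section Aux.
Variables (Sigma : eqType) (V : finType) (E : rel V)
  (delta : V -> seq Sigma) (Q : seq Sigma) (s0 : Sigma).

Lemma subseq_drop_le (s : seq Sigma) m n : m <= n -> subseq (drop n s) (drop m s).
Proof.
move=> le; rewrite -(subnK le) -drop_drop; exact: drop_subseq.
Qed.

Lemma hv_eq i u f : hvertex delta Q (i, u, f) ->
  [/\ i < size Q, f < size (delta u) & nth s0 Q i = nth s0 (delta u) f].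
Proof.
case=> hi hf [d hd]; split => //.
by rewrite (set_nth_default d) // hd (set_nth_default s0).
Qed.

Lemma partQ x xs : hvertex delta Q x -> hpath_rec E delta Q x xs ->
  subseq [seq nth s0 Q y.1.1 | y <- x :: xs] (drop x.1.1 Q).
Proof.
elim: xs x => [|y ys IH] [[i u] f] hx /=.
  move=> _; case/hv_eq: hx => hi _ _.
  by rewrite (drop_nth s0 hi) /= eqxx sub0seq.
case: y => [[i' u'] f'] [[hii _] [hy hr]].
case/hv_eq: hx => hi _ _.
rewrite (drop_nth s0 hi) /= eqxx.
apply: subseq_trans (IH _ hy hr) _ => /=.
exact: subseq_drop_le.
Qed.

Lemma partG x xs : hvertex delta Q x -> hpath_rec E delta Q x xs ->
  exists P, [/\ is_gpath E P, head x.1.2 P = x.1.2 &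
    subseq [seq nth s0 Q y.1.1 | y <- x :: xs]
      (drop x.2 (delta x.1.2) ++ spell delta (behead P))].
Proof.
elim: xs x => [|y ys IH] [[i u] f] hx /=.
  move=> _; exists [:: u]; split => //=.
  case/hv_eq: hx => hi hf ->.
  by rewrite (drop_nth s0 hf) /= eqxx sub0seq.
case: y => [[i' u'] f'] [[hii hcase] [hy hr]].
have [P [gP hP sP]] := IH _ hy hr; move: sP => /= sP.
case/hv_eq: hx => hi hf hQ.
case: P gP hP sP => [//|w P] /= gP hw; subst w.
case: hcase => [[neq [R [gR hR lR]]]|[equ lt]].
- case: R gR hR lR => [//|w R] /= gR hw lR; subst w.
  exists (u :: R ++ P); split => //=.
    by rewrite cat_path gR lR.
  rewrite hQ (drop_nth s0 hf) /= eqxx.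
  case/lastP: R gR lR => [|R w] _ /=; first by move=> e; rewrite e in neq.
  rewrite last_rcons => e; subst w.
  apply: subseq_trans sP _.
  rewrite /spell map_cat flatten_cat map_rcons -cats1 flatten_cat /= cats0.
  rewrite catA; apply: cat_subseq => //.
  apply: subseq_trans (drop_subseq _ _) _.
  by rewrite catA suffix_subseq.
- subst u'; exists (u :: P); split => //=.
  rewrite hQ (drop_nth s0 hf) /= eqxx.
  apply: subseq_trans sP _.
  apply: cat_subseq => //; exact: subseq_drop_le.
Qed.

End Aux.

Theorem lemma3 (Sigma : eqType) (V : finType) (E : rel V)
  (delta : V -> seq Sigma) (Q : seq Sigma) (s0 : Sigma)
  (hdelta : forall u : V, delta u != [::])
  (p : seq (nat * V * nat)) :
  is_hpath E delta Q p ->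
  common_subseq E delta Q [seq nth s0 Q x.1.1 | x <- p].
Proof.
case: p => [//|x xs] [hx hr].
have [P [gP hP sP]] := @partG _ _ _ _ _ s0 _ _ hx hr.
exists P; split => //; split.
  apply: subseq_trans (@partQ _ _ _ _ _ s0 _ _ hx hr) _; exact: drop_subseq.
apply: subseq_trans sP _.
case: P gP hP => [//|w P] _ /= ->.
rewrite /spell /=; apply: cat_subseq => //; exact: drop_subseq.
Qed.
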